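(* Let $K$ be a field, $A\subset K$ a finite set with $|A|=m$, $0\le p\le m$, and $X=\{x_1,\dots,x_{m-p}\}$ a set of indeterminates. Let $B\subset K$ be any finite set with $|B|\ge p$. Then in $K[X]$, $$\sum_{A'\subset A,\ |A'|=p}\mathcal{R}(A\setminus A',B)\frac{\mathcal{R}(X,A')}{\mathcal{R}(A\setminus A',A')}=\sum_{B'\subset B,\ |B'|=p}\mathcal{R}(A,B\setminus B')\frac{\mathcal{R}(X,B')}{\mathcal{R}(B',B\setminus B')}.$$
   Context: For finite sets $Y,Z$ of elements or indeterminates, $\mathcal{R}(Y,Z):=\prod_{y\in Y,z\in Z}(y-z)$, with $\mathcal{R}(Y,Z)=1$ if $Y$ or $Z$ is empty. *)

(* Defs.v *)
From HB Require Import structures.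
From mathcomp Require Import all_boot all_algebra.
From mathcomp Require Import finmap.
From mathcomp Require Import mpoly.
Set Implicit Arguments. Unset Strict Implicit. Unset Printing Implicit Defensive.
Import GRing.Theory.
Local Open Scope ring_scope.

Definition Rres (R : comNzRingType) (Y Z : seq R) : R :=
  \prod_(y <- Y) \prod_(z <- Z) (y - z).

Definition elems (K : choiceType) (A : {fset K}) (S : {set A}) : seq K :=
  [seq val x | x in S].

Definition Xvars (K : comNzRingType) (n : nat) : seq {mpoly K[n]} :=
  [seq 'X_i | i : 'I_n].

Definition cstP (K : comNzRingType) (n : nat) (s : seq K) : seq {mpoly K[n]} :=
  [seq c%:MP | c <- s].

(* Main.v *)
Require Import Defs.
From HB Require Import structures.
From mathcomp Require Import all_boot all_algebra.
From mathcomp Require Import finmap.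
From mathcomp Require Import mpoly.
From mathcomp Require Import zify ring.
Import GRing.Theory.
Local Open Scope ring_scope.

Set Implicit Arguments. Unset Strict Implicit. Unset Printing Implicit Defensive.

Lemma roots_zero (S : idomainType) (P : {poly S}) (rs : seq S) :
  (size P <= size rs)%N -> uniq rs -> all (root P) rs -> P = 0.
Proof.
move=> hs hu hr; apply/eqP; apply: contraT => nz.
by have := max_poly_roots nz hr hu; rewrite ltnNge hs.
Qed.

Lemma size_sum_scale (S : idomainType) (I : finType) (P : pred I) (c : I -> S)
  (W : finType) (C : I -> {set W}) (g : W -> S) (k : nat) :
  (forall i, P i -> #|C i| = k) ->
  (size (\sum_(i | P i) c i *: \prod_(a in C i) ('X - (g a)%:P))%R <= k.+1)%N.
Proof.
move=> hC; elim/big_rec: _ => [|i q Pi hq]; first by rewrite size_poly0.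
apply: leq_trans (size_polyD _ _) _; rewrite geq_max hq andbT.
apply: leq_trans (size_scale_leq _ _) _.
rewrite -big_enum /= -(big_map g xpredT (fun x => 'X - x%:P)) size_prod_XsubC.
by rewrite size_map -cardE hC.
Qed.

Lemma prod_in_split (R : comNzRingType) (W : finType) (E : {set W}) (b : W) (F : W -> R) :
  b \in E -> \prod_(d in E) F d = F b * \prod_(d in E :\ b) F d.
Proof.
move=> hb; rewrite (bigD1 b) //=; congr (_ * _); apply: eq_bigl => d.
by rewrite !inE andbC.
Qed.

Lemma only_full (W : finType) (D C : {set W}) :
  (C \subset D) && (#|C| == #|D|) = (C == D).
Proof.
rewrite eqEcard; case hs: (C \subset D) => //=.
apply/eqP/idP => [->//|h]; apply/eqP; rewrite eqn_leq h andbT.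
exact: subset_leq_card.
Qed.

Lemma sub_notin (W : finType) (D C : {set W}) (b : W) :
  (C \subset D) && (b \notin C) = (C \subset D :\ b).
Proof.
apply/andP/idP => [[h1 h2]|h].
  apply/subsetP => x hx; rewrite !inE (subsetP h1 _ hx) andbT.
  by apply: contraNneq h2 => <-.
split; first by apply: subset_trans h (subsetDl _ _).
by apply/negP => /(subsetP h); rewrite !inE eqxx.
Qed.

Lemma setD_D1 (W : finType) (D C : {set W}) (b : W) :
  (D :\ b) :\: C = (D :\: C) :\ b.
Proof. by apply/setP => x; rewrite !inE; case: (x == b); case: (x \in C). Qed.

Lemma Qlem (K : fieldType) (U : finType) (f : U -> K) (finj : injective f) (k : nat) :
 forall (ys : seq K) (E : {set U}), (size ys + k)%N = #|E| ->
 \sum_(C : {set U} | (C \subset E) && (#|C| == k))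
   (\prod_(y <- ys) \prod_(c in C) (y - f c)) / (\prod_(d in E :\: C) \prod_(c in C) (f d - f c)) = 1.
Proof.
elim=> [|y ys IH] E hE.
  rewrite add0n in hE; rewrite (eq_bigl (fun C : {set U} => C == E)); last by move=> C; rewrite hE only_full.
  by rewrite big_pred1_eq big_nil setDv big_set0 divr1.
pose w (C : {set U}) := (\prod_(y <- ys) \prod_(c in C) (y - f c)) / (\prod_(d in E :\: C) \prod_(c in C) (f d - f c)).
pose pr (C : {set U}) : {poly K} := \prod_(c in C) ('X - (f c)%:P).
pose q : {poly K} := \sum_(C : {set U} | (C \subset E) && (#|C| == k)) w C *: pr C.
have hq : q = 1.
  apply/eqP; rewrite -subr_eq0; apply/eqP.
  apply: (@roots_zero _ _ [seq f b | b in E]).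
  - apply: leq_trans (size_polyD _ _) _; rewrite size_polyN size_poly1 size_map -cardE -hE.
    have hs : (size q <= k.+1)%N by apply: size_sum_scale => C /andP[_ /eqP].
    by rewrite geq_max /= (leq_trans hs) ?addSn ?ltnS ?leq_addl.
  - by rewrite map_inj_uniq // enum_uniq.
  apply/allP => _ /mapP[b hb ->]; rewrite mem_enum in hb.
  rewrite /root hornerD hornerN hornerC subr_eq0 horner_sum; apply/eqP.
  rewrite (bigID (fun C : {set U} => b \in C)) /= big1 ?add0r; last first.
    move=> C /andP[_ hbC]; rewrite hornerZ /pr horner_prod (bigD1 b) //=.
    by rewrite hornerD hornerN hornerX hornerC subrr mul0r mulr0.
  rewrite -(IH (E :\ b)); last by move: hE; rewrite (cardsD1 b E) hb /= addSn => -[].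
  rewrite (eq_bigl (fun C : {set U} => (C \subset E :\ b) && (#|C| == k))); last first.
    by move=> C; rewrite -sub_notin andbAC.
  apply: eq_bigr => C /andP[hC _]; rewrite hornerZ /pr horner_prod.
  under eq_bigr => i _ do rewrite hornerXsubC.
  rewrite /w (prod_in_split _ (b := b)); last first.
    by rewrite !inE hb andbT; apply/negP => /(subsetP hC); rewrite !inE eqxx.
  rewrite -setD_D1.
  set P := \prod_(i in C) _.
  have hP : P != 0.
    apply/prodf_neq0 => c hc; rewrite subr_eq0; apply/negP => /eqP /finj hbc.
    by move: (subsetP hC _ hc); rewrite -hbc !inE eqxx.
  by rewrite [P * _]mulrC invfM mulrA divfK.
have := congr1 (fun r => r.[y]) hq; rewrite hornerC horner_sum => hy; apply: etrans hy.
apply: eq_bigr => C _; rewrite hornerZ /pr horner_prod big_cons.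
rewrite [X in _ = _ * X](eq_bigr (fun i => y - f i)); last by move=> i _; rewrite hornerXsubC.
by rewrite /w [RHS]mulrC mulrA.
Qed.

Lemma prod_setT_split (R : comNzRingType) (U : finType) (B : {set U}) (F : U -> R) :
  \prod_(b in [set: U]) F b = \prod_(b in ~: B) F b * \prod_(b in B) F b.
Proof.
rewrite (bigID (fun b => b \in B)) /= mulrC; congr (_ * _); apply: eq_bigl => b;
by rewrite !inE.
Qed.

Lemma keyA (K : fieldType) (T U : finType) (e : T -> K) (f : U -> K) (einj : injective e)
  (D A' : {set T}) (a : T) : a \in D -> a \notin A' ->
  (\prod_(d in D :\: A') \prod_(b in [set: U]) (e d - f b)) /
     (\prod_(d in D :\: A') \prod_(c in A') (e d - e c)) * \prod_(c in A') (e a - e c)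
  = \prod_(b in [set: U]) (e a - f b) *
    ((\prod_(d in (D :\ a) :\: A') \prod_(b in [set: U]) (e d - f b)) /
     (\prod_(d in (D :\ a) :\: A') \prod_(c in A') (e d - e c))).
Proof.
move=> haD haA.
have had : a \in D :\: A' by rewrite !inE haD haA.
rewrite (prod_in_split _ had) (prod_in_split (fun d => \prod_(c in A') (e d - e c)) had).
rewrite -setD_D1.
set P := \prod_(c in A') _.
have hP : P != 0.
  apply/prodf_neq0 => c hc; rewrite subr_eq0; apply/negP => /eqP /einj hac.
  by move: haA; rewrite hac hc.
by rewrite [P * _]mulrC invfM !mulrA divfK.
Qed.

Lemma keyB (K : fieldType) (T U : finType) (e : T -> K) (f : U -> K)
  (D : {set T}) (B' : {set U}) (a : T) : a \in D ->
  (\prod_(d in D) \prod_(b in ~: B') (e d - f b)) /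
     (\prod_(c in B') \prod_(b in ~: B') (f c - f b)) * \prod_(b in B') (e a - f b)
  = \prod_(b in [set: U]) (e a - f b) *
    ((\prod_(d in D :\ a) \prod_(b in ~: B') (e d - f b)) /
     (\prod_(c in B') \prod_(b in ~: B') (f c - f b))).
Proof.
move=> haD; rewrite (prod_in_split _ haD) (prod_setT_split B').
by ring.
Qed.

Lemma Glem (K : fieldType) (S : idomainType) (iota : {rmorphism K -> S}) (T U : finType)
  (e : T -> K) (f : U -> K) (einj : injective e) (finj : injective f) (p : nat)
  (hpU : (p <= #|U|)%N) :
 forall (xs : seq S) (D : {set T}), (size xs + p)%N = #|D| ->
 \sum_(A' : {set T} | (A' \subset D) && (#|A'| == p))
   iota ((\prod_(d in D :\: A') \prod_(b in [set: U]) (e d - f b)) /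
         (\prod_(d in D :\: A') \prod_(a in A') (e d - e a)))
     * \prod_(x <- xs) \prod_(a in A') (x - iota (e a))
 = \sum_(B' : {set U} | #|B'| == p)
   iota ((\prod_(d in D) \prod_(b in ~: B') (e d - f b)) /
         (\prod_(c in B') \prod_(b in ~: B') (f c - f b)))
     * \prod_(x <- xs) \prod_(b in B') (x - iota (f b)).
Proof.
elim=> [|x xs IH] D hD.
  rewrite add0n in hD.
  rewrite (eq_bigl (fun A' : {set T} => A' == D)); last by move=> A'; rewrite hD only_full.
  rewrite big_pred1_eq big_nil mulr1 setDv !big_set0 divr1 rmorph1.
  under eq_bigr => B' _ do rewrite big_nil mulr1.
  rewrite -rmorph_sum; apply/esym.
  have hQ := Qlem finj (k := (#|U| - p)%N) (ys := [seq e d | d in D]) (E := [set: U]).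
  rewrite size_map -cardE cardsT -hD subnKC // in hQ.
  rewrite -[RHS](rmorph1 iota); congr (iota _); apply: etrans (hQ erefl).
  rewrite (reindex_inj (@setC_inj U)) /=.
  apply: eq_big => C.
    have := hpU; rewrite subsetT /= -(cardsC C) => h; apply/eqP/eqP; lia.
  by move=> _; rewrite setCK setTD big_map big_enum /=.
pose cA (D A' : {set T}) : K := (\prod_(d in D :\: A') \prod_(b in [set: U]) (e d - f b)) /
         (\prod_(d in D :\: A') \prod_(a in A') (e d - e a)).
pose cB (D : {set T}) (B' : {set U}) : K := (\prod_(d in D) \prod_(b in ~: B') (e d - f b)) /
         (\prod_(c in B') \prod_(b in ~: B') (f c - f b)).
pose rA (A' : {set T}) : S := \prod_(x <- xs) \prod_(a in A') (x - iota (e a)).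
pose rB (B' : {set U}) : S := \prod_(x <- xs) \prod_(b in B') (x - iota (f b)).
pose pA (A' : {set T}) : {poly S} := \prod_(a in A') ('X - (iota (e a))%:P).
pose pB (B' : {set U}) : {poly S} := \prod_(b in B') ('X - (iota (f b))%:P).
pose PL : {poly S} := \sum_(A' : {set T} | (A' \subset D) && (#|A'| == p)) (iota (cA D A') * rA A') *: pA A'.
pose PR : {poly S} := \sum_(B' : {set U} | #|B'| == p) (iota (cB D B') * rB B') *: pB B'.
pose g (a : T) : K := \prod_(b in [set: U]) (e a - f b).
have hPL : forall a, a \in D -> PL.[iota (e a)] =
   iota (g a) * \sum_(A' : {set T} | (A' \subset D :\ a) && (#|A'| == p)) iota (cA (D :\ a) A') * rA A'.
  move=> a haD; rewrite horner_sum (bigID (fun A' : {set T} => a \in A')) /= big1 ?add0r; last first.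
    move=> A' /andP[_ haA]; rewrite hornerZ /pA horner_prod (bigD1 a) //=.
    by rewrite hornerXsubC subrr mul0r mulr0.
  rewrite mulr_sumr (eq_bigl (fun A' : {set T} => (A' \subset D :\ a) && (#|A'| == p))); last first.
    by move=> A'; rewrite -sub_notin andbAC.
  apply: eq_bigr => A' /andP[hA' _]; rewrite hornerZ /pA horner_prod.
  under eq_bigr => i _ do rewrite hornerXsubC -rmorphB.
  have haA : a \notin A' by apply/negP => /(subsetP hA'); rewrite !inE eqxx.
  rewrite -rmorph_prod mulrAC -rmorphM /cA keyA // rmorphM -/(cA (D :\ a) A').
  by rewrite mulrA.
have hPR : forall a, a \in D -> PR.[iota (e a)] =
   iota (g a) * \sum_(B' : {set U} | #|B'| == p) iota (cB (D :\ a) B') * rB B'.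
  move=> a haD; rewrite horner_sum mulr_sumr.
  apply: eq_bigr => B' _; rewrite hornerZ /pB horner_prod.
  under eq_bigr => i _ do rewrite hornerXsubC -rmorphB.
  rewrite -rmorph_prod mulrAC -rmorphM /cB keyB // rmorphM -/(cB (D :\ a) B').
  by rewrite mulrA.
have hP : PL = PR.
  apply/eqP; rewrite -subr_eq0; apply/eqP.
  apply: (@roots_zero _ _ [seq iota (e a) | a in D]).
  - apply: leq_trans (size_polyD _ _) _; rewrite size_polyN size_map -cardE -hD.
    have h1 : (size PL <= p.+1)%N by apply: size_sum_scale => A' /andP[_ /eqP].
    have h2 : (size PR <= p.+1)%N by apply: size_sum_scale => B' /eqP.
    have h3 : (p.+1 <= size (x :: xs) + p)%N by rewrite /= addSn ltnS leq_addl.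
    by rewrite geq_max (leq_trans h1 h3) (leq_trans h2 h3).
  - rewrite map_inj_uniq ?enum_uniq // => a b /fmorph_inj /einj //.
  apply/allP => _ /mapP[a ha ->]; rewrite mem_enum in ha.
  rewrite /root hornerD hornerN subr_eq0 hPL // hPR //.
  rewrite IH //; move: hD; rewrite (cardsD1 a D) ha /=; lia.
have hx := congr1 (fun r => r.[x]) hP; rewrite /= !horner_sum in hx.
apply: etrans (etrans _ hx) _.
  apply: eq_bigr => A' _; rewrite hornerZ /pA horner_prod big_cons.
  rewrite [X in _ = _ * X](eq_bigr (fun i => x - iota (e i))); last by move=> i _; rewrite hornerXsubC.
  by rewrite /rA /cA; ring.
apply: eq_bigr => B' _; rewrite hornerZ /pB horner_prod big_cons.
rewrite [X in _ * X = _](eq_bigr (fun i => x - iota (f i))); last by move=> i _; rewrite hornerXsubC.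
by rewrite /rB /cB; ring.
Qed.

Lemma RresE (R : comNzRingType) (T U : finType) (e : T -> R) (f : U -> R)
  (X : {set T}) (Y : {set U}) :
  Rres [seq e x | x in X] [seq f y | y in Y] = \prod_(x in X) \prod_(y in Y) (e x - f y).
Proof. by rewrite /Rres big_map big_enum; apply: eq_bigr => x _; rewrite big_map big_enum. Qed.

Lemma RresX (R S : comNzRingType) (iota : R -> S) (xs : seq S) (T : finType) (e : T -> R)
  (X : {set T}) :
  Rres xs [seq iota c | c <- [seq e x | x in X]] = \prod_(x <- xs) \prod_(a in X) (x - iota (e a)).
Proof. by rewrite /Rres; apply: eq_bigr => x _; rewrite !big_map big_enum. Qed.

Unset Implicit Arguments.

Theorem lemma3p1 (K : fieldType) (A B : {fset K}) (m p : nat)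
  (hA : #|` A| = m) (hp : (p <= m)%N) (hB : (p <= #|` B|)%N) :
  \sum_(A' : {set A} | #|A'| == p)
     (Rres (elems (~: A')) (elems [set: B]) / Rres (elems (~: A')) (elems A'))
       *: Rres (Xvars K (m - p)) (cstP (m - p) (elems A'))
  =
  \sum_(B' : {set B} | #|B'| == p)
     (Rres (elems [set: A]) (elems (~: B')) / Rres (elems B') (elems (~: B')))
       *: Rres (Xvars K (m - p)) (cstP (m - p) (elems B')).
Proof.
have hB' : (p <= #|[set: B]|)%N by move: hB; rewrite cardfE cardsT.
rewrite cardsT in hB'.
have hs : (size (Xvars K (m - p)) + p)%N = #|[set: A]|.
  by rewrite size_map -cardE card_ord cardsT -cardfE hA subnK.
have G := Glem (@mpolyC (m - p) K : {rmorphism _ -> _}) val_inj val_inj hB' hs.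
rewrite (eq_bigl (fun A' : {set A} => (A' \subset [set: A]) && (#|A'| == p))); last first.
  by move=> A'; rewrite subsetT.
apply: etrans (etrans _ G) _.
  apply: eq_bigr => A' _; rewrite /elems /Xvars /cstP !RresE RresX -mul_mpolyC setTD.
  by [].
apply: eq_bigr => B' _; rewrite /elems /Xvars /cstP !RresE RresX -mul_mpolyC.
by [].
Qed.
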